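(* Let $(A^\bullet,\int_A)$ and $(B^\bullet,\int_B)$ be Poincaré duality $\mathbb R$-algebras of dimensions $d_A\ge1$ and $d_B\ge1$, and let $\ell_A\in A^1$, $\ell_B\in B^1$. If $A^\bullet$ satisfies $\operatorname{HR}^{\le1}_{\ell_A}$ and $B^\bullet$ satisfies $\operatorname{HR}^{\le1}_{\ell_B}$, then $((A\otimes B)^\bullet,\int_{A\otimes B})$ satisfies $\operatorname{HR}^{\le1}_{\ell_A\otimes1+1\otimes\ell_B}$.
   Context: A graded finite commutative $\mathbb R$-algebra $A^\bullet=\bigoplus_{i=0}^dA^i$ is a Poincaré duality algebra of dimension $d$ with degree map $\int:A^d\xrightarrow{\sim}\mathbb R$ if $A^0=\mathbb R$ and $(\xi,\zeta)\mapsto\int\xi\zeta$ is a non-degenerate pairing $A^i\times A^{d-i}\to\mathbb R$ for all $i$. $(A\otimes B)^k=\bigoplus_{i+j=k}A^i\otimes B^j$, a Poincaré duality algebra of dimension $d_A+d_B$ with $\int_{A\otimes B}(a\otimes b)=\int_Aa\cdot\int_Bb$. For $\ell\in A^1$ and $0\le i\le\lfloor d/2\rfloor$: $Q^i_\ell(x,y)=\int xy\ell^{d-2i}$ on $A^i$; the primitive space is $P^i_\ell=\{x\in A^i: x\ell^{d-2i+1}=0\}$; $A^\bullet$ satisfies $\operatorname{HR}^i_\ell$ if $(-1)^iQ^i_\ell$ is positive definite on $P^i_\ell$; $\operatorname{HR}^{\le1}_\ell$ means $\operatorname{HR}^0_\ell$ and $\operatorname{HR}^1_\ell$. *)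

(* Defs.v *)
(* Graded finite commutative R-algebras are represented by a
   homogeneous basis (a finite index type) and structure constants. *)
From HB Require Import structures.
From mathcomp Require Import all_boot all_order all_algebra.
From mathcomp Require Import reals.
Set Implicit Arguments. Unset Strict Implicit. Unset Printing Implicit Defensive.
Import Order.TTheory GRing.Theory Num.Theory.
Local Open Scope ring_scope.

Section GradedAlgebras.
Variable R : realType.

(* A finite-dimensional graded R-algebra given by a basis indexed by [gidx],
   each basis vector e_k homogeneous of degree [gdeg k], structure constants
   e_k * e_l = \sum_m gmul k l m e_m, a unit element [gone] (in coordinates),
   and a linear functional [gint] (in coordinates) used as degree map. *)
Record galg := GAlg {
  gidx : finType;
  gdeg : gidx -> nat;
  gmul : gidx -> gidx -> gidx -> R;
  gone : {ffun gidx -> R};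
  gint : {ffun gidx -> R} }.

Definition elt (A : galg) := {ffun gidx A -> R}.

Definition amul (A : galg) (x y : elt A) : elt A :=
  [ffun m => \sum_k \sum_l x k * y l * @gmul A k l m].

Definition homog (A : galg) (i : nat) (x : elt A) : Prop :=
  forall k, @gdeg A k != i -> x k = 0.

Definition aint (A : galg) (x : elt A) : R := \sum_k gint A k * x k.

Fixpoint apow (A : galg) (x : elt A) (n : nat) : elt A :=
  match n with 0 => gone A | n'.+1 => amul x (apow x n') end.

Definition is_gcalg (A : galg) : Prop :=
  [/\ (forall k l m, @gmul A k l m != 0 -> @gdeg A m = (@gdeg A k + @gdeg A l)%N),
      (forall k l m, @gmul A k l m = @gmul A l k m),
      (forall x y z : elt A, amul (amul x y) z = amul x (amul y z)),
      (forall x : elt A, amul (gone A) x = x) &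
      gone A != 0 /\ (forall x : elt A, homog 0 x <-> exists a : R, x = [ffun k => a * gone A k])].

Definition is_PD (A : galg) (d : nat) : Prop :=
  [/\ is_gcalg A,
      (forall k, (@gdeg A k <= d)%N),
      (* aint : A^d -> R is a linear isomorphism *)
      (forall x : elt A, homog d x -> aint x = 0 -> x = 0),
      (exists x : elt A, homog d x /\ aint x = 1) &
      (* non-degenerate pairing A^i x A^(d-i) -> R *)
      (forall i, (i <= d)%N ->
        (forall x : elt A, homog i x -> x != 0 ->
           exists y : elt A, homog (d - i) y /\ aint (amul x y) != 0) /\
        (forall y : elt A, homog (d - i) y -> y != 0 ->
           exists x : elt A, homog i x /\ aint (amul x y) != 0))].

Definition Qform (A : galg) (d : nat) (l : elt A) (i : nat) (x y : elt A) : R :=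
  aint (amul x (amul y (apow l (d - 2 * i)))).

Definition primitive (A : galg) (d : nat) (l : elt A) (i : nat) (x : elt A) : Prop :=
  homog i x /\ amul x (apow l (d - 2 * i + 1)) = 0.

Definition HR (A : galg) (d : nat) (l : elt A) (i : nat) : Prop :=
  (2 * i <= d)%N ->
  forall x : elt A, primitive d l i x -> x != 0 ->
    0 < (-1) ^+ i * Qform d l i x x.

Definition HRle1 (A : galg) (d : nat) (l : elt A) : Prop :=
  HR d l 0 /\ HR d l 1.

(* tensor product: basis e_k (x) f_k' *)
Definition gtensor (A B : galg) : galg :=
  @GAlg (gidx A * gidx B)%type
    (fun p => (@gdeg A p.1 + @gdeg B p.2)%N)
    (fun p q r => @gmul A p.1 q.1 r.1 * @gmul B p.2 q.2 r.2)
    [ffun p => gone A p.1 * gone B p.2]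
    [ffun p => gint A p.1 * gint B p.2].

Definition etens (A B : galg) (a : elt A) (b : elt B) : elt (gtensor A B) :=
  [ffun p => a p.1 * b p.2].

End GradedAlgebras.

(* Main.v *)
Require Import Defs.
From HB Require Import structures.
From mathcomp Require Import all_boot all_order all_algebra.
From mathcomp Require Import reals ring lra zify.
Set Implicit Arguments. Unset Strict Implicit. Unset Printing Implicit Defensive.
Import Order.TTheory GRing.Theory Num.Theory.
Local Open Scope ring_scope.

Section Gen.
Variable R : realType.
Variable A : galg R.
Implicit Types x y z : elt A.

Lemma eltD x y k : (x + y) k = x k + y k.
Proof. by rewrite ffunE. Qed.
Lemma elt0 k : (0 : elt A) k = 0.
Proof. by rewrite ffunE. Qed.

Definition esc (c : R) x : elt A := [ffun k => c * x k].

Lemma amulDl x y z : amul (x + y) z = amul x z + amul y z.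
Proof.
apply/ffunP => m; rewrite !ffunE -big_split; apply: eq_bigr => k _.
rewrite -big_split; apply: eq_bigr => l _; by rewrite eltD !mulrDl.
Qed.
Lemma amulDr x y z : amul x (y + z) = amul x y + amul x z.
Proof.
apply/ffunP => m; rewrite !ffunE -big_split; apply: eq_bigr => k _.
rewrite -big_split; apply: eq_bigr => l _; by rewrite eltD mulrDr mulrDl.
Qed.
Lemma amul0l x : amul 0 x = 0.
Proof.
apply/ffunP => m; rewrite !ffunE big1 // => k _; rewrite big1 // => l _.
by rewrite elt0 !mul0r.
Qed.
Lemma amul0r x : amul x 0 = 0.
Proof.
apply/ffunP => m; rewrite !ffunE big1 // => k _; rewrite big1 // => l _.
by rewrite elt0 mulr0 mul0r.
Qed.
Lemma amulZl c x y : amul (esc c x) y = esc c (amul x y).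
Proof.
apply/ffunP => m; rewrite !ffunE mulr_sumr; apply: eq_bigr => k _.
rewrite mulr_sumr; apply: eq_bigr => l _; rewrite ffunE; ring.
Qed.
Lemma amulZr c x y : amul x (esc c y) = esc c (amul x y).
Proof.
apply/ffunP => m; rewrite !ffunE mulr_sumr; apply: eq_bigr => k _.
rewrite mulr_sumr; apply: eq_bigr => l _; rewrite ffunE; ring.
Qed.
Lemma amul_sumr (I : Type) (r : seq I) (P : pred I) (F : I -> elt A) x :
  amul x (\sum_(i <- r | P i) F i) = \sum_(i <- r | P i) amul x (F i).
Proof. exact: (big_morph (amul x) (amulDr x) (amul0r x)). Qed.

Lemma aintD x y : aint (x + y) = aint x + aint y.
Proof. rewrite /aint -big_split; apply: eq_bigr => k _; by rewrite eltD mulrDr. Qed.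
Lemma aint0 : aint (0 : elt A) = 0.
Proof. by rewrite /aint big1 // => k _; rewrite elt0 mulr0. Qed.
Lemma aintZ c x : aint (esc c x) = c * aint x.
Proof. rewrite /aint mulr_sumr; apply: eq_bigr => k _; rewrite ffunE; ring. Qed.
Lemma aint_sum (I : Type) (r : seq I) (P : pred I) (F : I -> elt A) :
  aint (\sum_(i <- r | P i) F i) = \sum_(i <- r | P i) aint (F i).
Proof. by apply: (big_morph (@aint R A)); [exact: aintD | exact: aint0]. Qed.

Lemma amulC x y : (forall k l m, @gmul R A k l m = @gmul R A l k m) -> amul x y = amul y x.
Proof.
move=> hc; apply/ffunP => m; rewrite !ffunE exchange_big; apply: eq_bigr => k _.
apply: eq_bigr => l _; rewrite hc; ring.
Qed.

Lemma homog0 i : homog i (0 : elt A).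
Proof. by move=> k _; rewrite elt0. Qed.
Lemma homogD i x y : homog i x -> homog i y -> homog i (x + y).
Proof. by move=> hx hy k hk; rewrite eltD hx // hy // addr0. Qed.
Lemma homogZ i c x : homog i x -> homog i (esc c x).
Proof. by move=> hx k hk; rewrite ffunE hx // mulr0. Qed.
Lemma homog_amul i j x y :
  (forall k l m, @gmul R A k l m != 0 -> @gdeg R A m = (@gdeg R A k + @gdeg R A l)%N) ->
  homog i x -> homog j y -> homog (i + j) (amul x y).
Proof.
move=> hg hx hy m hm; rewrite ffunE big1 // => k _; rewrite big1 // => l _.
have [xk0|xk] := eqVneq (x k) 0; first by rewrite xk0 !mul0r.
have [yl0|yl] := eqVneq (y l) 0; first by rewrite yl0 mulr0 mul0r.
have [g0|gn] := eqVneq (gmul k l m) 0; first by rewrite g0 mulr0.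
exfalso; move/negP: hm; apply; rewrite (hg _ _ _ gn).
have -> : gdeg k = i by apply/eqP; apply: contraNT xk => /hx ->.
have -> : gdeg l = j by apply/eqP; apply: contraNT yl => /hy ->.
by [].
Qed.
Lemma homog_high d i x : (forall k, (@gdeg R A k <= d)%N) -> (d < i)%N -> homog i x -> x = 0.
Proof.
move=> hd hi hx; apply/ffunP => k; rewrite elt0; apply: hx.
apply/negP => /eqP e; move: (hd k); rewrite e; lia.
Qed.
End Gen.
Lemma pascal (V : zmodType) (X : nat -> nat -> V) n :
  \sum_(j < n.+1) (X j.+1 (n - j)%N + X j (n - j).+1) *+ 'C(n, j) =
  \sum_(j < n.+2) X j (n.+1 - j)%N *+ 'C(n.+1, j).
Proof.
rewrite [RHS]big_ord_recl /=.
under [in RHS]eq_bigr => j _ do rewrite binS mulrnDr subSS.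
rewrite big_split /= addrC.
under eq_bigr => j _ do rewrite mulrnDl.
rewrite big_split /= [RHS]addrCA; congr (_ + _).
  rewrite big_ord_recl [X in _ = _ + X]big_ord_recr /= (bin_small (ltnSn n)) mulr0n addr0 !subn0 !bin0.
  congr (_ + _); apply: eq_bigr => j _.
  have hj := ltn_ord j.
  by rewrite /bump /= add1n subnSK.
Qed.

Section Tensor.
Variable R : realType.
Variables A B : galg R.

Lemma etens_mul (a a' : elt A) (b b' : elt B) :
  amul (etens a b) (etens a' b') = etens (amul a a') (amul b b').
Proof.
apply/ffunP => -[m m']; rewrite !ffunE /=.
transitivity (\sum_k \sum_k' \sum_l \sum_l'
   ((a k * a' l * gmul k l m) * (b k' * b' l' * gmul k' l' m'))).
  symmetry; rewrite pair_bigA; apply: eq_bigr => -[k k'] _.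
  rewrite pair_bigA; apply: eq_bigr => -[l l'] _ /=.
  rewrite !ffunE /=; ring.
rewrite big_distrl; apply: eq_bigr => k _ /=.
rewrite big_distrl /= exchange_big; apply: eq_bigr => k' _ /=.
rewrite big_distrr; apply: eq_bigr => l _ /=.
rewrite big_distrr; apply: eq_bigr => l' _ /=.
ring.
Qed.

Lemma aint_etens (a : elt A) (b : elt B) : aint (etens a b) = aint a * aint b.
Proof.
rewrite /aint big_distrl /=.
transitivity (\sum_k \sum_k' (gint A k * a k) * (gint B k' * b k')).
  rewrite pair_bigA; apply: eq_bigr => -[k k'] _; rewrite !ffunE /=; ring.
apply: eq_bigr => k _; rewrite big_distrr; apply: eq_bigr => k' _ //.
Qed.

Lemma etensDl (a a' : elt A) (b : elt B) : etens (a + a') b = etens a b + etens a' b.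
Proof. by apply/ffunP => p; rewrite !ffunE mulrDl. Qed.
Lemma etensDr (a : elt A) (b b' : elt B) : etens a (b + b') = etens a b + etens a b'.
Proof. by apply/ffunP => p; rewrite !ffunE mulrDr. Qed.
Lemma etens_gone : etens (gone A) (gone B) = gone (gtensor A B).
Proof. by apply/ffunP => p; rewrite !ffunE. Qed.

Lemma amulMnr n (x y : elt (gtensor A B)) : amul x (y *+ n) = amul x y *+ n.
Proof. by elim: n => [|n IH]; rewrite ?mulr0n ?amul0r // !mulrS amulDr IH. Qed.
Lemma aintMn n (x : elt (gtensor A B)) : aint (x *+ n) = aint x *+ n.
Proof. by elim: n => [|n IH]; rewrite ?mulr0n ?aint0 // !mulrS aintD IH. Qed.

Lemma apow_tensor (lA : elt A) (lB : elt B) n :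
  (forall x : elt A, amul (gone A) x = x) -> (forall x : elt B, amul (gone B) x = x) ->
  apow (etens lA (gone B) + etens (gone A) lB) n =
  \sum_(j < n.+1) etens (apow lA j) (apow lB (n - j)) *+ 'C(n, j).
Proof.
move=> uA uB; elim: n => [|n IH].
  by rewrite big_ord1 /= etens_gone.
rewrite /= IH amul_sumr -(pascal (fun i k => etens (apow lA i) (apow lB k))); apply: eq_bigr => j _.
rewrite amulMnr amulDl !etens_mul uA uB.
by [].
Qed.
End Tensor.

Section Tensor2.
Variable R : realType.
Variables A B : galg R.
Variables (lA : elt A) (lB : elt B).
Hypothesis uA : forall x : elt A, amul (gone A) x = x.
Hypothesis uB : forall x : elt B, amul (gone B) x = x.
Let L := etens lA (gone B) + etens (gone A) lB.

Lemma int1 (u : elt A) (v : elt B) n :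
  aint (amul (etens u v) (apow L n)) =
  \sum_(j < n.+1) (aint (amul u (apow lA j)) * aint (amul v (apow lB (n - j)))) *+ 'C(n, j).
Proof.
rewrite /L apow_tensor // amul_sumr aint_sum; apply: eq_bigr => j _.
by rewrite amulMnr aintMn etens_mul aint_etens.
Qed.

Lemma int2 (u u' : elt A) (v v' : elt B) n :
  aint (amul (etens u v) (amul (etens u' v') (apow L n))) =
  \sum_(j < n.+1) (aint (amul u (amul u' (apow lA j))) *
                   aint (amul v (amul v' (apow lB (n - j))))) *+ 'C(n, j).
Proof.
rewrite /L apow_tensor // !amul_sumr aint_sum; apply: eq_bigr => j _.
by rewrite !amulMnr aintMn !etens_mul aint_etens.
Qed.

Lemma pick_term (F : nat -> elt A) (G : nat -> elt B) (eF eG n dA dB : nat) :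
  (forall k, (@gdeg R A k <= dA)%N) -> (forall k, (@gdeg R B k <= dB)%N) ->
  (forall j, homog (eF + j) (F j)) -> (forall k, homog (eG + k) (G k)) ->
  (eF + eG + n = dA + dB)%N ->
  \sum_(j < n.+1) (aint (F j) * aint (G (n - j)%N)) *+ 'C(n, j) =
  if (eF <= dA)%N && (eG <= dB)%N
  then (aint (F (dA - eF)%N) * aint (G (dB - eG)%N)) *+ 'C(n, dA - eF)
  else 0.
Proof.
move=> bA bB hF hG hn.
have van : forall j : 'I_n.+1, (dA < eF + j)%N \/ (dB < eG + (n - j))%N ->
    (aint (F j) * aint (G (n - j)%N)) *+ 'C(n, j) = 0.
  move=> j [h|h].
    by rewrite (homog_high bA h (hF j)) aint0 mul0r mul0rn.
  by rewrite (homog_high bB h (hG _)) aint0 mulr0 mul0rn.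
case: ifP => /andP.
  case=> hA hB.
  have hj : (dA - eF < n.+1)%N by lia.
  rewrite (bigD1 (Ordinal hj)) //= big1 ?addr0.
    by have -> : (n - (dA - eF) = dB - eG)%N by lia.
  move=> j hj'; apply: van.
  have hjn := ltn_ord j.
  have : nat_of_ord j != (dA - eF)%N by apply: contra hj' => /eqP e; apply/eqP/val_inj.
  move=> /eqP; lia.
move=> hc; rewrite big1 // => j _; apply: van.
have hjn := ltn_ord j.
case: (leqP (eF + j) dA) => h1; last by left.
right; case: (leqP (eG + (n - j)) dB) => h2 //.
exfalso; apply: hc; split; lia.
Qed.
End Tensor2.

Section PerAlg.
Variable R : realType.
Variable A : galg R.
Variable d : nat.
Variable l : elt A.
Hypothesis d1 : (1 <= d)%N.
Hypothesis pd : is_PD A d.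
Hypothesis hl : homog 1 l.
Hypothesis hr : HRle1 d l.

Lemma pd_gr : forall k l m, @gmul R A k l m != 0 -> @gdeg R A m = (@gdeg R A k + @gdeg R A l)%N.
Proof. by case: pd => -[]. Qed.
Lemma pd_comm : forall k l m, @gmul R A k l m = @gmul R A l k m.
Proof. by case: pd => -[]. Qed.
Lemma pd_assoc : forall x y z : elt A, amul (amul x y) z = amul x (amul y z).
Proof. by case: pd => -[]. Qed.
Lemma pd_unit : forall x : elt A, amul (gone A) x = x.
Proof. by case: pd => -[]. Qed.
Lemma pd_unitr : forall x : elt A, amul x (gone A) = x.
Proof. by move=> x; rewrite amulC ?pd_unit //; exact: pd_comm. Qed.
Lemma pd_gone0 : gone A != 0.
Proof. by case: pd => -[] _ _ _ _ []. Qed.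
Lemma pd_homog_gone : homog 0 (gone A).
Proof.
case: pd => -[] _ _ _ _ [] _ h _ _ _ _; apply/h; exists 1.
by apply/ffunP => k; rewrite ffunE mul1r.
Qed.
Lemma pd_bd : forall k, (@gdeg R A k <= d)%N.
Proof. by case: pd. Qed.
Lemma pd_inj : forall x : elt A, homog d x -> aint x = 0 -> x = 0.
Proof. by case: pd. Qed.
Lemma homog_apow n : homog n (apow l n).
Proof.
elim: n => [|n IH] /=; first exact: pd_homog_gone.
exact: (homog_amul pd_gr hl IH).
Qed.
Lemma pd_amulC (x y : elt A) : amul x y = amul y x.
Proof. exact: (amulC _ _ pd_comm). Qed.

Definition alphaA := aint (apow l d).

Lemma alpha_pos : 0 < alphaA.
Proof.
case: hr => h0 _.
have := h0 (leq0n _) (gone A) _ pd_gone0.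
rewrite /Qform /= expr0 mul1r muln0 subn0 !pd_unit; apply.
split; first exact: pd_homog_gone.
rewrite pd_unit muln0 subn0; apply: (homog_high pd_bd _ (@homog_apow (d+1)%N)); lia.
Qed.

Lemma hodge (a : elt A) : homog 1 a ->
  let s := aint (amul a (apow l (d - 1))) in
  let q := aint (amul a (amul a (apow l (d - 2)))) in
  q * alphaA <= s ^+ 2 /\ (a != 0 -> s = 0 -> (2 <= d)%N /\ q < 0).
Proof.
move=> ha s q.
have apos := alpha_pos.
case: (leqP d 1) => hd.
  have ed : d = 1%N by lia.
  have hq : q = 0.
    rewrite /q ed /= pd_unitr.
    have -> : amul a a = 0.
      apply: (homog_high pd_bd _ (homog_amul pd_gr ha ha)); lia.
    exact: aint0.
  split; first by rewrite hq mul0r sqr_ge0.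
  move=> an0 hs; exfalso; move/negP: an0; apply; apply/eqP; apply: pd_inj.
    by rewrite ed.
  by move: hs; rewrite /s ed /= pd_unitr.
set c := alphaA.
have cpos : 0 < c := apos.
set a0 := esc c a + esc (- s) l.
have e1 : (d - 1 = (d - 2).+1)%N by lia.
have e2 : (d = (d - 1).+1)%N by lia.
have Pd1 : amul l (apow l (d - 1)) = apow l d by rewrite [in RHS]e2.
have Pd2 : amul l (apow l (d - 2)) = apow l (d - 1) by rewrite [in RHS]e1.
have ha0 : homog 1 a0 by apply: homogD; apply: homogZ.
have prim : primitive d l 1 a0.
  split=> //.
  have -> : (d - 2 * 1 + 1 = d - 1)%N by lia.
  apply: pd_inj.
    have := homog_amul pd_gr ha0 (@homog_apow (d - 1)).
    by have -> : (1 + (d - 1) = d)%N by lia.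
  rewrite amulDl !amulZl aintD !aintZ Pd1 -/s /c /alphaA; ring.
set P2 := apow l (d - 2).
have eQ : Qform d l 1 a0 a0 = c * (c * q - s ^+ 2).
  rewrite /Qform muln1 -/P2 /a0 !(amulDl, amulDr, amulZl, amulZr).
  rewrite !aintD !aintZ Pd2 Pd1 -/s -/q.
  have -> : amul l (amul a P2) = amul a (apow l (d - 1)).
    by rewrite -pd_assoc (pd_amulC l a) pd_assoc Pd2.
  rewrite !aintD !aintZ -/s -/q /c /alphaA; ring.
have hQ : a0 != 0 -> c * q - s ^+ 2 < 0.
  move=> an; case: hr => _ h1.
  have := h1 _ a0 prim an; rewrite eQ expr1 mulN1r oppr_gt0.
  move=> h; have {}h : c * (c * q - s ^+ 2) < 0 by apply: h; lia.
  nra.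
split.
  have [a00|an] := eqVneq a0 0.
    have : Qform d l 1 a0 a0 = 0 by rewrite /Qform a00 amul0l aint0.
    rewrite eQ => /eqP; rewrite mulf_eq0 (gt_eqF cpos) /= subr_eq0 => /eqP h.
    by rewrite mulrC h.
  by have := hQ an; nra.
move=> an s0; split; first lia.
have a0n : a0 != 0.
  apply: contra an => /eqP h; apply/eqP/ffunP => k.
  have := congr1 (fun f : elt A => f k) h; rewrite /a0 eltD !ffunE s0 oppr0 mul0r addr0.
  move/eqP; rewrite mulf_eq0 (gt_eqF cpos) /= => /eqP ->; done.
have := hQ a0n; rewrite s0 expr0n /= subr0; nra.
Qed.
End PerAlg.

Lemma final_ineq (R : realType) (al be sA sB qA qB c PA RB c1 c1' nA nB : R) :
  0 < al -> 0 < be -> 0 < c -> 0 < c1 -> 0 <= PA -> 0 <= RB -> 0 < nA -> 0 < nB ->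
  sA * be * c1 + al * sB * c1' = 0 -> c1' * nA = c1 * nB ->
  c * (nA - 1) = PA * nB -> RB * nA = c * (nB - 1) ->
  qA * al <= sA ^+ 2 -> qB * be <= sB ^+ 2 ->
  (sA = 0 -> sB = 0 -> PA * be * qA + RB * al * qB < 0) ->
  PA * be * qA + 2 * c * sA * sB + RB * al * qB < 0.
Proof.
move=> ha hb hc hc1 hPA hRB hnA hnB prim ec1 ePA eRB hqA hqB hstr.
have lin : nA * be * sA + nB * al * sB = 0.
  have : c1 * (nA * be * sA + nB * al * sB) = 0.
    rewrite -[RHS](mulr0 nA) -prim.
    have -> : c1 * (nA * be * sA + nB * al * sB) = nA * be * sA * c1 + al * sB * (c1 * nB) by ring.
    rewrite -ec1; ring.
  by move/eqP; rewrite mulf_eq0 (gt_eqF hc1) /= => /eqP.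
have [sA0|sAn] := eqVneq sA 0.
  have sB0 : sB = 0.
    move: lin; rewrite sA0 mulr0 add0r => /eqP; rewrite !mulf_eq0 !(gt_eqF hnB) (gt_eqF ha) /=.
    by move/eqP.
  by rewrite sA0 sB0 !mulr0 addr0; apply: hstr.
set X := nA * be * sA.
set Y := nB * al * sB.
set S := PA * be ^+ 2 * sA ^+ 2 + 2 * c * al * be * sA * sB + RB * al ^+ 2 * sB ^+ 2.
have eS : nA ^+ 2 * nB ^+ 2 * S =
   nA * nB * (nA * be ^+ 2 * sA ^+ 2 * (PA * nB - c * (nA - 1)) +
              nB * al ^+ 2 * sB ^+ 2 * (RB * nA - c * (nB - 1)))
   + c * (X + Y) * (nA * nB * (X + Y) + nA * (X - Y)) - c * (nA + nB) * X ^+ 2.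
  rewrite /S /X /Y; ring.
have XY : X + Y = 0 by rewrite /X /Y.
rewrite -ePA eRB !subrr !mulr0 addr0 mulr0 XY mulr0 mul0r add0r in eS.
have Xn : X != 0 by rewrite /X !mulf_neq0 ?(gt_eqF hnA) ?(gt_eqF hb).
have X2 : 0 < X ^+ 2 by rewrite exprn_even_gt0.
have Sneg : S < 0.
  have : nA ^+ 2 * nB ^+ 2 * S < 0.
    rewrite eS sub0r oppr_lt0; apply: mulr_gt0 => //; apply: mulr_gt0 => //; lra.
  have p : 0 < nA ^+ 2 * nB ^+ 2 by rewrite mulr_gt0 // exprn_gt0.
  by rewrite pmulr_rlt0.
have h1 : PA * be ^+ 2 * (qA * al) <= PA * be ^+ 2 * sA ^+ 2.
  by rewrite ler_wpM2l // mulr_ge0 // sqr_ge0.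
have h2 : RB * al ^+ 2 * (qB * be) <= RB * al ^+ 2 * sB ^+ 2.
  by rewrite ler_wpM2l // mulr_ge0 // sqr_ge0.
have hab : 0 < al * be by rewrite mulr_gt0.
rewrite -(pmulr_rlt0 _ hab).
have -> : al * be * (PA * be * qA + 2 * c * sA * sB + RB * al * qB) =
  PA * be ^+ 2 * (qA * al) + 2 * c * al * be * sA * sB + RB * al ^+ 2 * (qB * be) by ring.
move: Sneg; rewrite /S; lra.
Qed.

Lemma deg0_unique (R : realType) (A : galg R) (d : nat) : is_PD A d ->
  exists k0, [/\ gone A k0 != 0, (forall k, @gdeg R A k = 0%N -> k = k0) &
                 (forall k, k != k0 -> gone A k = 0)].
Proof.
move=> pd.
have hg := pd_homog_gone pd.
have [k0 hk0|hn] := pickP (fun k => gone A k != 0); last first.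
  exfalso; move/negP: (pd_gone0 pd); apply; apply/eqP/ffunP => k.
  by move: (hn k) => /= /negbFE /eqP ->; rewrite elt0.
have uniq : forall k, @gdeg R A k = 0%N -> k = k0.
  move=> k hk; apply/eqP; apply: contraT => hne.
  have hd : homog 0 ([ffun j => (j == k)%:R] : elt A).
    move=> j hj; rewrite ffunE; case: eqP => // e; move: hj; by rewrite e hk.
  case: pd => -[] _ _ _ _ [] _ h _ _ _ _.
  have [a ea] := (h _).1 hd.
  have e1 := congr1 (fun f : elt A => f k) ea.
  have e2 := congr1 (fun f : elt A => f k0) ea.
  move: e1 e2; rewrite !ffunE eqxx eq_sym (negbTE hne) /= => e1 /esym /eqP.
  rewrite mulf_eq0 (negbTE hk0) orbF => /eqP a0.
  by move: e1; rewrite a0 mul0r => /eqP; rewrite oner_eq0.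
exists k0; split=> // k hk.
apply: hg; apply/eqP => e; move/negP: hk; apply; apply/eqP; exact: uniq.
Qed.

Lemma etens0l (R : realType) (A B : galg R) (b : elt B) : etens (0 : elt A) b = 0.
Proof. by apply/ffunP => p; rewrite !ffunE mul0r. Qed.
Lemma etens0r (R : realType) (A B : galg R) (a : elt A) : etens a (0 : elt B) = 0.
Proof. by apply/ffunP => p; rewrite !ffunE mulr0. Qed.

Section Dec.
Variable R : realType.
Variables A B : galg R.
Variables dA dB : nat.
Hypothesis pdA : is_PD A dA.
Hypothesis pdB : is_PD B dB.

Lemma tensor_dec0 (x : elt (gtensor A B)) : homog 0 x ->
  exists mu, x = etens (esc mu (gone A)) (gone B).
Proof.
move=> hx.
have [k0 [g0 u0 z0]] := deg0_unique pdA.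
have [k0' [g0' u0' z0']] := deg0_unique pdB.
exists (x (k0, k0') / (gone A k0 * gone B k0')).
apply/ffunP => -[k k']; rewrite !ffunE /=.
have [ek|nk] := eqVneq k k0; have [ek'|nk'] := eqVneq k' k0'.
- by rewrite ek ek'; field; rewrite g0 g0'.
- rewrite (z0' _ nk') mulr0; apply: hx => /=.
  apply/negP => /eqP e; move/negP: nk'; apply; apply/eqP; apply: u0'; lia.
- rewrite (z0 _ nk) mulr0 mul0r; apply: hx => /=.
  apply/negP => /eqP e; move/negP: nk; apply; apply/eqP; apply: u0; lia.
- rewrite (z0 _ nk) mulr0 mul0r; apply: hx => /=.
  apply/negP => /eqP e; move/negP: nk; apply; apply/eqP; apply: u0; lia.
Qed.

Lemma tensor_dec1 (x : elt (gtensor A B)) : homog 1 x ->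
  exists a b, [/\ homog 1 a, homog 1 b & x = etens a (gone B) + etens (gone A) b].
Proof.
move=> hx.
have [k0 [g0 u0 z0]] := deg0_unique pdA.
have [k0' [g0' u0' z0']] := deg0_unique pdB.
have dk0 : @gdeg R A k0 = 0%N.
  apply/eqP; apply: contraR g0 => h; apply/eqP; exact: (pd_homog_gone pdA).
have dk0' : @gdeg R B k0' = 0%N.
  apply/eqP; apply: contraR g0' => h; apply/eqP; exact: (pd_homog_gone pdB).
exists [ffun k => x (k, k0') / gone B k0'], [ffun k' => x (k0, k') / gone A k0].
split.
- move=> k hk; rewrite ffunE hx ?mul0r //= dk0' addn0 //.
- move=> k hk; rewrite ffunE hx ?mul0r //= dk0 //.
apply/ffunP => -[k k']; rewrite !ffunE /=.
have [ek|nk] := eqVneq k k0; have [ek'|nk'] := eqVneq k' k0'.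
- rewrite ek ek'.
  have -> : x (k0, k0') = 0 by apply: hx; rewrite /= dk0 dk0'.
  by rewrite !mul0r mulr0 addr0.
- rewrite (z0' _ nk') mulr0 add0r ek; field; exact: g0.
- rewrite (z0 _ nk) mul0r addr0 ek'; field; exact: g0'.
- rewrite (z0 _ nk) (z0' _ nk') mulr0 mul0r addr0; apply: hx => /=.
  have h1 : @gdeg R A k != 0%N by apply: contra nk => /eqP /u0 ->.
  have h2 : @gdeg R B k' != 0%N by apply: contra nk' => /eqP /u0' ->.
  lia.
Qed.
End Dec.

Lemma bf1 dA dB : (0 < dA)%N -> (0 < dB)%N ->
  ('C(dA + dB - 1, dA) * dA = 'C(dA + dB - 1, dA - 1) * dB)%N.
Proof.
move=> h1 h2; have := mul_bin_left (dA + dB - 1) (dA - 1).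
have -> : (dA - 1).+1 = dA by lia.
have -> : (dA + dB - 1 - (dA - 1) = dB)%N by lia.
by rewrite mulnC => ->; rewrite mulnC.
Qed.
Lemma bf2 dA dB : (1 < dA)%N -> (0 < dB)%N ->
  ('C(dA + dB - 2, dA - 1) * (dA - 1) = 'C(dA + dB - 2, dA - 2) * dB)%N.
Proof.
move=> h1 h2; have := mul_bin_left (dA + dB - 2) (dA - 2).
have -> : (dA - 2).+1 = (dA - 1)%N by lia.
have -> : (dA + dB - 2 - (dA - 2) = dB)%N by lia.
by rewrite mulnC => ->; rewrite mulnC.
Qed.
Lemma bf3 dA dB : (0 < dA)%N -> (0 < dB)%N ->
  ('C(dA + dB - 2, dA) * dA = 'C(dA + dB - 2, dA - 1) * (dB - 1))%N.
Proof.
move=> h1 h2; have := mul_bin_left (dA + dB - 2) (dA - 1).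
have -> : (dA - 1).+1 = dA by lia.
have -> : (dA + dB - 2 - (dA - 1) = dB - 1)%N by lia.
by rewrite mulnC => ->; rewrite mulnC.
Qed.
Lemma bf4 dA dB : (0 < dA)%N -> (0 < dB)%N -> (0 < 'C(dA + dB - 2, dA - 1))%N.
Proof. move=> h1 h2; rewrite bin_gt0; lia. Qed.
Lemma bf5 dA dB : (0 < dA)%N -> (0 < dB)%N -> (0 < 'C(dA + dB - 1, dA - 1))%N.
Proof. move=> h1 h2; rewrite bin_gt0; lia. Qed.
Lemma bf6 dA dB : (1 < dA)%N -> (0 < dB)%N -> (0 < 'C(dA + dB - 2, dA - 2))%N.
Proof. move=> h1 h2; rewrite bin_gt0; lia. Qed.
Lemma bf7 dA dB : (0 < dA)%N -> (1 < dB)%N -> (0 < 'C(dA + dB - 2, dA))%N.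
Proof. move=> h1 h2; rewrite bin_gt0; lia. Qed.
Lemma bf8 dA dB : (0 < dA)%N -> (0 < dB)%N -> (1 < dB)%N = false -> 'C(dA + dB - 2, dA) = 0%N.
Proof. move=> h1 h2 h; apply: bin_small; lia. Qed.

Lemma final_step (R : realType) (dA dB : nat) (al be sA sB qA qB : R) :
  (0 < dA)%N -> (0 < dB)%N -> 0 < al -> 0 < be ->
  sA * be *+ 'C(dA + dB - 1, dA - 1) + al * sB *+ 'C(dA + dB - 1, dA) = 0 ->
  qA * al <= sA ^+ 2 -> qB * be <= sB ^+ 2 ->
  (sA = 0 -> sB = 0 -> ((1 < dA)%N /\ qA < 0) \/ ((1 < dB)%N /\ qB < 0)) ->
  (if (1 < dA)%N then qA * be *+ 'C(dA + dB - 2, dA - 2) else 0) +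
  sA * sB *+ 'C(dA + dB - 2, dA - 1) +
  (sA * sB *+ 'C(dA + dB - 2, dA - 1) +
   (if (1 < dB)%N then al * qB *+ 'C(dA + dB - 2, dA) else 0)) < 0.
Proof.
move=> dA1 dB1 alA alB P0 hqA hqB hs.
pose PA : R := if (1 < dA)%N then ('C(dA + dB - 2, dA - 2))%:R else 0.
have eT1 : (if (1 < dA)%N then qA * be *+ 'C(dA + dB - 2, dA - 2) else 0) = PA * be * qA.
  rewrite /PA; case: ifP => _; last by rewrite !mul0r.
  by rewrite -mulr_natr; ring.
have eT4 : (if (1 < dB)%N then al * qB *+ 'C(dA + dB - 2, dA) else 0) =
    ('C(dA + dB - 2, dA))%:R * al * qB.
  case: ifP => h; first by rewrite -mulr_natr; ring.
  rewrite (bf8 dA1 dB1 h).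
  by rewrite !mul0r.
rewrite eT1 eT4.
have -> : sA * sB *+ 'C(dA + dB - 2, dA - 1) = sA * sB * ('C(dA + dB - 2, dA - 1))%:R.
  by rewrite mulr_natr.
have {}P0 : sA * be * ('C(dA + dB - 1, dA - 1))%:R + al * sB * ('C(dA + dB - 1, dA))%:R = 0.
  by rewrite !mulr_natr.
have hc : 0 < ('C(dA + dB - 2, dA - 1))%:R :> R by rewrite ltr0n bf4.
have hc1 : 0 < ('C(dA + dB - 1, dA - 1))%:R :> R by rewrite ltr0n bf5.
have hPA : 0 <= PA by rewrite /PA; case: ifP.
have hRB : 0 <= ('C(dA + dB - 2, dA))%:R :> R by rewrite ler0n.
have hnA : 0 < dA%:R :> R by rewrite ltr0n.
have hnB : 0 < dB%:R :> R by rewrite ltr0n.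
have ec1 : ('C(dA + dB - 1, dA))%:R * dA%:R = ('C(dA + dB - 1, dA - 1))%:R * dB%:R :> R.
  by rewrite -!natrM bf1.
have ePA : ('C(dA + dB - 2, dA - 1))%:R * (dA%:R - 1) = PA * dB%:R :> R.
  rewrite /PA; case: ifP => h; last first.
    have -> : dA = 1%N by apply/eqP; rewrite eqn_leq dA1 andbT leqNgt h.
    by rewrite subrr mulr0 mul0r.
  by rewrite -(natrB _ (ltnW h)) -!natrM bf2.
have eRB : ('C(dA + dB - 2, dA))%:R * dA%:R = ('C(dA + dB - 2, dA - 1))%:R * (dB%:R - 1) :> R.
  by rewrite -(natrB _ dB1) -!natrM bf3.
have hstr : sA = 0 -> sB = 0 ->
    PA * be * qA + ('C(dA + dB - 2, dA))%:R * al * qB < 0.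
  move=> sA0 sB0; case: (hs sA0 sB0) => -[h2 hq].
  - have pPA : 0 < PA by rewrite /PA h2 ltr0n bf6.
    have qB0 : qB <= 0 by move: hqB; rewrite sB0 expr0n /=; nra.
    have t1 : 0 < PA * be by apply: mulr_gt0.
    have t2 : 0 <= ('C(dA + dB - 2, dA))%:R * al by apply: mulr_ge0 => //; apply: ltW.
    nra.
  - have pRB : 0 < ('C(dA + dB - 2, dA))%:R :> R by rewrite ltr0n bf7.
    have qA0 : qA <= 0 by move: hqA; rewrite sA0 expr0n /=; nra.
    have t1 : 0 <= PA * be by apply: mulr_ge0 => //; apply: ltW.
    have t2 : 0 < ('C(dA + dB - 2, dA))%:R * al by apply: mulr_gt0.
    nra.
have := final_ineq alA alB hc hc1 hPA hRB hnA hnB P0 ec1 ePA eRB hqA hqB hstr.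
lra.
Qed.


Lemma homog_m1 (R : realType) (A : galg R) d (l u : elt A) e :
  is_PD A d -> homog 1 l -> homog e u -> forall j, homog (e + j) (amul u (apow l j)).
Proof. move=> pd hl hu j; exact: (homog_amul (pd_gr pd) hu (@homog_apow _ _ _ _ pd hl j)). Qed.
Lemma homog_m2 (R : realType) (A : galg R) d (l u u' : elt A) e e' :
  is_PD A d -> homog 1 l -> homog e u -> homog e' u' ->
  forall j, homog (e + e' + j) (amul u (amul u' (apow l j))).
Proof.
move=> pd hl hu hu' j; rewrite -addnA.
apply: homog_amul => //; [exact: pd_gr pd | exact: homog_m1 pd hl hu' j].
Qed.

Unset Implicit Arguments.

Theorem proposition6p5 (R : realType) (A B : galg R) (dA dB : nat)
  (lA : elt A) (lB : elt B) :
  (1 <= dA)%N -> (1 <= dB)%N ->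
  is_PD A dA -> is_PD B dB ->
  homog 1 lA -> homog 1 lB ->
  HRle1 dA lA -> HRle1 dB lB ->
  HRle1 (dA + dB) (etens lA (gone B) + etens (gone A) lB).
Proof.
move=> dA1 dB1 pdA pdB hlA hlB hrA hrB.
have uA := pd_unit pdA; have uB := pd_unit pdB.
have hgA := pd_homog_gone pdA; have hgB := pd_homog_gone pdB.
have bA := pd_bd pdA; have bB := pd_bd pdB.
have alA := alpha_pos dA1 pdA hlA hrA; have alB := alpha_pos dB1 pdB hlB hrB.
split.
- move=> _ x [hx _] xn0.
  have [mu ex] := tensor_dec0 pdA pdB hx.
  rewrite expr0 mul1r /Qform muln0 subn0 ex int2 //.
  rewrite (@pick_term R A B (fun j => amul (esc mu (gone A)) (amul (esc mu (gone A)) (apow lA j)))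
             (fun k => amul (gone B) (amul (gone B) (apow lB k))) 0 0 (dA + dB) dA dB bA bB); last first.
  + by [].
  + exact: (homog_m2 pdB hlB hgB hgB).
  + exact: (homog_m2 pdA hlA (homogZ mu hgA) (homogZ mu hgA)).
  rewrite /= subn0 !amulZl !amulZr !uA !uB !aintZ.
  have mun : mu != 0.
    apply: contra xn0 => /eqP m0; apply/eqP; rewrite ex m0.
    have -> : esc 0 (gone A) = 0 by apply/ffunP => k; rewrite !ffunE mul0r.
    exact: etens0l.
  rewrite pmulrn_lgt0 ?bin_gt0 ?leq_addr //.
  rewrite /alphaA in alA alB.
  have : 0 < mu * mu by rewrite -expr2 exprn_even_gt0.
  move=> h; rewrite subn0 mulrA; apply: mulr_gt0 => //; exact: mulr_gt0.
- move=> hd x [hx hp] xn0.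
  have [a [b [ha hb ex]]] := tensor_dec1 pdA pdB hx.
  move: (hodge dA1 pdA hlA hrA ha) => /= [hqA hsA].
  move: (hodge dB1 pdB hlB hrB hb) => /= [hqB hsB].
  rewrite /alphaA in alA alB hqA hqB.
  have e1 : (dA + dB - 2 * 1 + 1 = dA + dB - 1)%N by lia.
  have P0 : aint (amul x (apow (etens lA (gone B) + etens (gone A) lB) (dA + dB - 1))) = 0.
    by rewrite -e1 hp aint0.
  move: P0; rewrite ex amulDl aintD !int1 //.
  rewrite (@pick_term R A B (fun j => amul a (apow lA j))
             (fun k => amul (gone B) (apow lB k)) 1 0 (dA + dB - 1) dA dB bA bB); first last.
  + lia.
  + exact: (homog_m1 pdB hlB hgB).
  + exact: (homog_m1 pdA hlA ha).
  rewrite (@pick_term R A B (fun j => amul (gone A) (apow lA j))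
             (fun k => amul b (apow lB k)) 0 1 (dA + dB - 1) dA dB bA bB); first last.
  + lia.
  + exact: (homog_m1 pdB hlB hb).
  + exact: (homog_m1 pdA hlA hgA).
  rewrite /= dA1 dB1 /= !uA !uB !subn0 => P0.
  rewrite expr1 mulN1r oppr_gt0 /Qform muln1.
  rewrite !amulDl !amulDr !aintD !int2 //.
  rewrite (@pick_term R A B (fun j => amul a (amul a (apow lA j)))
             (fun k => amul (gone B) (amul (gone B) (apow lB k))) 2 0 (dA + dB - 2) dA dB bA bB);
    first last.
  + lia.
  + exact: (homog_m2 pdB hlB hgB hgB).
  + exact: (homog_m2 pdA hlA ha ha).
  rewrite (@pick_term R A B (fun j => amul a (amul (gone A) (apow lA j)))
             (fun k => amul (gone B) (amul b (apow lB k))) 1 1 (dA + dB - 2) dA dB bA bB);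
    first last.
  + lia.
  + exact: (homog_m2 pdB hlB hgB hb).
  + exact: (homog_m2 pdA hlA ha hgA).
  rewrite (@pick_term R A B (fun j => amul (gone A) (amul a (apow lA j)))
             (fun k => amul b (amul (gone B) (apow lB k))) 1 1 (dA + dB - 2) dA dB bA bB);
    first last.
  + lia.
  + exact: (homog_m2 pdB hlB hb hgB).
  + exact: (homog_m2 pdA hlA hgA ha).
  rewrite (@pick_term R A B (fun j => amul (gone A) (amul (gone A) (apow lA j)))
             (fun k => amul b (amul b (apow lB k))) 0 2 (dA + dB - 2) dA dB bA bB);
    first last.
  + lia.
  + exact: (homog_m2 pdB hlB hb hb).
  + exact: (homog_m2 pdA hlA hgA hgA).
  rewrite /= dA1 dB1 /= !uA !uB !subn0 !andbT.
  apply: (final_step dA1 dB1 alA alB P0 hqA hqB).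
  move=> sA0 sB0.
  have [an|a0] := eqVneq a 0.
    have [bn|b0] := eqVneq b 0.
      by move/negP: xn0; case; rewrite ex an bn etens0l etens0r addr0.
    by right; apply: hsB.
  by left; apply: hsA.
Qed.
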